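(* For any term $t$, any context $\Gamma$ and any type $T$ of the Scalar type system: (1) if $\Gamma\vdash(\mathbf 0)\,t:T$ then $T\equiv\overline0$; (2) if $\Gamma\vdash(t)\,\mathbf 0:T$ then $T\equiv\overline0$.
   Context: Fix a commutative ring $(\mathcal{S},+,\times)$. Terms: $t,r ::= b \mid (t)\,r \mid \mathbf{0} \mid \alpha.t \mid t+r$, basis terms $b ::= x \mid \lambda x\,t$, modulo associativity and commutativity of $+$. Types: $T ::= U \mid \forall X.T \mid \alpha.T \mid \overline{0}$; unit types: $U ::= X \mid U\to T \mid \forall X.U$. Type variables are only substituted by unit types; $(\alpha.T)[U/X]=\alpha.T[U/X]$. Type equivalence $\equiv$ is the least congruence with $\alpha.\overline0\equiv\overline0$, $0.T\equiv\overline0$, $1.T\equiv T$, $\alpha.(\beta.T)\equiv(\alpha\times\beta).T$, $\forall X.\alpha.T\equiv\alpha.\forall X.T$. A context is a set of distinct term variables with unit types. Typing rules: (ax) $\Gamma,x:U\vdash x:U$; ($\equiv$) from $\Gamma\vdash t:T$ and $T\equiv S$ infer $\Gamma\vdash t:S$; ($\to_E$) from $\Gamma\vdash t:\alpha.(U\to T)$ and $\Gamma\vdash r:\beta.U$ infer $\Gamma\vdash (t)\,r:(\alpha\times\beta).T$; ($\to_I$) from $\Gamma,x:U\vdash t:T$ infer $\Gamma\vdash\lambda x\,t:U\to T$; ($\forall_E$) from $\Gamma\vdash t:\forall X.T$ infer $\Gamma\vdash t:T[U/X]$, $U$ unit; ($\forall_I$) from $\Gamma\vdash t:T$ with $X$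 not free in $\Gamma$ infer $\Gamma\vdash t:\forall X.T$; ($ax_{\overline0}$) $\Gamma\vdash\mathbf 0:\overline0$; ($+_I$) from $\Gamma\vdash t:\alpha.T$ and $\Gamma\vdash r:\beta.T$ infer $\Gamma\vdash t+r:(\alpha+\beta).T$; ($s_I$) from $\Gamma\vdash t:T$ infer $\Gamma\vdash\alpha.t:\alpha.T$. *)

(* Defs.v *)
From mathcomp Require Import all_boot all_algebra.
Set Implicit Arguments. Unset Strict Implicit. Unset Printing Implicit Defensive.
Import GRing.Theory.
Local Open Scope ring_scope.

Section Scalar.
Variable S : comPzRingType.

(* Terms: sterm variables are de Bruijn indices; Lam binds index 0. *)
Inductive sterm : Type :=
| Var : nat -> sterm
| Lam : sterm -> sterm
| App : sterm -> sterm -> sterm       (* (t) r *)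
| Zero : sterm
| Scal : S -> sterm -> sterm
| Plus : sterm -> sterm -> sterm.

(* Raw types: stype variables are de Bruijn indices; TAll binds index 0. *)
Inductive stype : Type :=
| TVar : nat -> stype
| TArr : stype -> stype -> stype
| TAll : stype -> stype
| TScal : S -> stype -> stype
| TZero : stype.

Fixpoint wf_type (T : stype) : bool :=
  match T with
  | TVar _ => true
  | TArr A B => is_unit A && wf_type B
  | TAll T' => wf_type T'
  | TScal _ T' => wf_type T'
  | TZero => true
  end
with is_unit (T : stype) : bool :=
  match T with
  | TVar _ => true
  | TArr A B => is_unit A && wf_type B
  | TAll U => is_unit U
  | _ => false
  end.

Fixpoint tlift (d c : nat) (T : stype) : stype :=
  match T with
  | TVar n => TVar (if (c <= n)%N then (n + d)%N else n)
  | TArr A B => TArr (tlift d c A) (tlift d c B)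
  | TAll T' => TAll (tlift d c.+1 T')
  | TScal a T' => TScal a (tlift d c T')
  | TZero => TZero
  end.

Fixpoint tsubst (k : nat) (U : stype) (T : stype) : stype :=
  match T with
  | TVar n => if n == k then tlift k 0 U
              else if (k < n)%N then TVar n.-1 else TVar n
  | TArr A B => TArr (tsubst k U A) (tsubst k U B)
  | TAll T' => TAll (tsubst k.+1 U T')
  | TScal a T' => TScal a (tsubst k U T')
  | TZero => TZero
  end.

Inductive tequiv : stype -> stype -> Prop :=
| te_refl T : tequiv T T
| te_sym T T' : tequiv T T' -> tequiv T' T
| te_trans T1 T2 T3 : tequiv T1 T2 -> tequiv T2 T3 -> tequiv T1 T3
| te_arr A A' B B' : tequiv A A' -> tequiv B B' -> tequiv (TArr A B) (TArr A' B')
| te_all T T' : tequiv T T' -> tequiv (TAll T) (TAll T')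
| te_scal a T T' : tequiv T T' -> tequiv (TScal a T) (TScal a T')
| te_scal_zero a : tequiv (TScal a TZero) TZero
| te_zero_scal T : tequiv (TScal 0 T) TZero
| te_one T : tequiv (TScal 1 T) T
| te_mul a b T : tequiv (TScal a (TScal b T)) (TScal (a * b) T)
| te_all_scal a T : tequiv (TAll (TScal a T)) (TScal a (TAll T)).

Inductive term_ac : sterm -> sterm -> Prop :=
| ac_refl t : term_ac t t
| ac_sym t t' : term_ac t t' -> term_ac t' t
| ac_trans t1 t2 t3 : term_ac t1 t2 -> term_ac t2 t3 -> term_ac t1 t3
| ac_lam t t' : term_ac t t' -> term_ac (Lam t) (Lam t')
| ac_app t t' r r' : term_ac t t' -> term_ac r r' -> term_ac (App t r) (App t' r')
| ac_scal a t t' : term_ac t t' -> term_ac (Scal a t) (Scal a t')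
| ac_plus t t' r r' : term_ac t t' -> term_ac r r' -> term_ac (Plus t r) (Plus t' r')
| ac_comm t r : term_ac (Plus t r) (Plus r t)
| ac_assoc t r s : term_ac (Plus (Plus t r) s) (Plus t (Plus r s)).

(* Contexts: de Bruijn lists of unit types (index i = i-th variable). *)
Definition scontext := seq stype.
Definition is_context (G : scontext) : bool := all is_unit G.

Inductive typing : scontext -> sterm -> stype -> Prop :=
| ty_ax G n : (n < size G)%N -> typing G (Var n) (nth TZero G n)
| ty_equiv G t T T' : typing G t T -> tequiv T T' -> wf_type T' -> typing G t T'
| ty_arrE G t r a b U T :
    typing G t (TScal a (TArr U T)) -> typing G r (TScal b U) ->
    typing G (App t r) (TScal (a * b) T)
| ty_arrI G t U T : is_unit U -> typing (U :: G) t T -> typing G (Lam t) (TArr U T)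
| ty_allE G t T U : typing G t (TAll T) -> is_unit U -> typing G t (tsubst 0 U T)
| ty_allI G t T : typing (map (tlift 1 0) G) t T -> typing G t (TAll T)
| ty_ax0 G : typing G Zero TZero
| ty_plusI G t r a b T :
    typing G t (TScal a T) -> typing G r (TScal b T) ->
    typing G (Plus t r) (TScal (a + b) T)
| ty_sI G t a T : typing G t T -> typing G (Scal a t) (TScal a T)
| ty_ac G t t' T : typing G t T -> term_ac t t' -> typing G t' T.

End Scalar.

(* Main.v *)
Require Import Defs.
From mathcomp Require Import all_boot all_algebra.
Set Implicit Arguments. Unset Strict Implicit. Unset Printing Implicit Defensive.
Import GRing.Theory.
Local Open Scope ring_scope.

Section P.
Variable S : comPzRingType.

Fixpoint cf (T : stype S) : S :=
  match T with
  | TZero => 0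
  | TScal a T => a * cf T
  | TAll T => cf T
  | _ => 1
  end.

Lemma cf_equiv T T' : tequiv T T' -> cf T = cf T'.
Proof.
elim => //=; try congruence.
- by move=> a; rewrite mulr0.
- by move=> T0; rewrite mul0r.
- by move=> T0; rewrite mul1r.
- by move=> a b T0; rewrite mulrA.
Qed.

Fixpoint ub (T : stype S) : stype S :=
  match T with
  | TScal _ T => ub T
  | TAll T => TAll (ub T)
  | TZero => TZero S
  | T => T
  end.

Lemma equiv_norm (T : stype S) : tequiv T (TScal (cf T) (ub T)).
Proof.
elim: T => /=.
- move=> n; apply: te_sym; apply: te_one.
- move=> A _ B _; apply: te_sym; apply: te_one.
- move=> T IH; apply: te_trans (te_all IH) _; apply: te_all_scal.
- move=> a T IH; apply: te_trans (te_scal a IH) _; apply: te_mul.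
- apply: te_sym; apply: te_zero_scal.
Qed.

Lemma cf0_equiv (T : stype S) : cf T = 0 -> tequiv T (TZero S).
Proof.
move=> h; apply: te_trans (equiv_norm T) _; rewrite h; apply: te_zero_scal.
Qed.

Lemma cf_unit (U : stype S) : is_unit U -> cf U = 1.
Proof. by elim: U => //= T IH /IH. Qed.

Lemma unit_wf (U : stype S) : is_unit U -> wf_type U.
Proof. by elim: U. Qed.

Lemma tlift_wf (T : stype S) : forall d k, (wf_type T -> wf_type (tlift d k T)) /\
  (is_unit T -> is_unit (tlift d k T)).
Proof.
elim: T => //=.
- move=> A IA B IB d k; split=> /andP[hA hB];
  by rewrite (proj2 (IA d k) hA) (proj1 (IB d k) hB).
- by move=> a T IH d k; case: (IH d k).
Qed.

Lemma tsubst_wf (U T : stype S) : is_unit U -> forall k, (wf_type T -> wf_type (tsubst k U T)) /\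
  (is_unit T -> is_unit (tsubst k U T)).
Proof.
move=> hU; elim: T => //=.
- move=> n k; case: eqP => _; first by have [h1 h2] := tlift_wf U k 0; split=> _; [apply: h1; move: hU; clear; elim: U => //= | apply: h2].
  by case: ifP.
- move=> A IA B IB k; split=> /andP[hA hB];
  by rewrite (proj2 (IA k) hA) (proj1 (IB k) hB).
- by move=> a T IH k; case: (IH k).
Qed.

Lemma cf_tlift (T : stype S) d k : cf (tlift d k T) = cf T.
Proof. by elim: T d k => //= a T IH d k; rewrite IH. Qed.

Lemma cf_tsubst (U T : stype S) k : is_unit U -> cf (tsubst k U T) = cf T.
Proof.
move=> hU; elim: T k => //=.
- move=> n k; case: eqP => _; first by rewrite cf_tlift cf_unit.
  by case: ifP.
- by move=> a T IH k; rewrite IH.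
Qed.

Lemma typing_wf (G : scontext S) (t : sterm S) (T : stype S) : typing G t T -> is_context G -> wf_type T.
Proof.
elim => {G t T} //=.
- move=> G n hn hG; have: is_unit (nth (TZero S) G n) by apply: (all_nthP _ (hG : all (@is_unit S) G)).
  by apply: unit_wf.
- by move=> G t r a b U T _ IH _ _ hG; case/andP: (IH hG).
- by move=> G t U T hU _ IH hG; rewrite hU IH //= hU.
- move=> G t T U _ IH hU hG; exact: (proj1 (tsubst_wf T hU 0) (IH hG)).
- move=> G t T _ IH hG; apply: IH; rewrite /is_context all_map.
  by move: hG; rewrite /is_context; elim: G => //= x G IHG /andP[hx /IHG ->]; rewrite (proj2 (tlift_wf x 1 0) hx).
Qed.

Definition isz (t : sterm S) := if t is Zero then true else false.
Definition pz (t : sterm S) := if t is App a b then isz a || isz b else false.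

Lemma ac_inv (t t' : sterm S) : term_ac t t' -> isz t = isz t' /\ pz t = pz t'.
Proof.
elim => //=; try by intuition congruence.
Qed.

Lemma zero_typing (G : scontext S) (t : sterm S) (T : stype S) : typing G t T -> isz t -> cf T = 0.
Proof.
elim => {G t T} //=.
- by move=> G t T T' _ IH /cf_equiv <- _ /IH.
- by move=> G t T U _ IH hU /IH; rewrite cf_tsubst.
- by move=> G t t' T _ IH /ac_inv [<- _] /IH.
Qed.

Lemma app_typing (G : scontext S) (t : sterm S) (T : stype S) : typing G t T -> is_context G -> pz t -> cf T = 0.
Proof.
elim => {G t T} //=.
- by move=> G t T T' _ IH /cf_equiv <- _ hG /(IH hG).
- move=> G t r a b U T Ht _ Hr _ hG /orP [] h.
    have := zero_typing Ht h; rewrite /= mulr1 => ->; by rewrite !mul0r.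
  have := typing_wf Ht hG => /= /andP[hU _].
  have := zero_typing Hr h; rewrite /= cf_unit // mulr1 => ->; by rewrite mulr0 mul0r.
- by move=> G t T U _ IH hU hG /(IH hG); rewrite cf_tsubst.
- move=> G t T _ IH hG; apply: IH; rewrite /is_context all_map.
  by move: hG; rewrite /is_context; elim: G => //= x G IHG /andP[hx /IHG ->]; rewrite (proj2 (tlift_wf x 1 0) hx).
- by move=> G t t' T _ IH hac hG; case: (ac_inv hac) => _ <- /(IH hG).
Qed.

End P.

Theorem mainTheorem9 (S : comPzRingType) (t : sterm S) (G : scontext S) (T : stype S) :
  is_context G -> wf_type T ->
  (typing G (App (Zero S) t) T -> tequiv T (TZero S)) /\
  (typing G (App t (Zero S)) T -> tequiv T (TZero S)).
Proof.
move=> hG _; split=> h; apply: cf0_equiv; apply: (app_typing h hG) => /=.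
  by [].
by rewrite orbT.
Qed.
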